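(* Let $a$ be an automatic sequence and $\alpha$ a letter such that the logarithmic density $\lim_{N\to\infty}\frac1{\log N}\sum_{n\le N}\frac1n\mathbf 1_{[a(n)=\alpha]}$ equals $0$. Then the density $\lim_{N\to\infty}\frac1N\sum_{n\le N}\mathbf 1_{[a(n)=\alpha]}$ exists and equals $0$.
   Context: A sequence $a$ on a finite alphabet is automatic if for some $k\ge2$ there is a finite set of states $Q$, a transition map $\delta:Q\times\{0,\dots,k-1\}\to Q$ extended to words letter by letter, an initial state $q_0$ and an output map $\tau$ with $a(n)=\tau(\delta(q_0,(n)_k))$, $(n)_k$ being the base-$k$ expansion of $n$ (most significant digit first). *)

(* Defs.v *)
From HB Require Import structures.
From mathcomp Require Import all_boot all_order all_algebra.
From mathcomp Require Import all_classical all_reals all_analysis.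
Set Implicit Arguments. Unset Strict Implicit. Unset Printing Implicit Defensive.
Import Order.TTheory GRing.Theory Num.Theory.

(* base-k digits of n, least significant first (fuel = n suffices for k >= 2);
   the expansion of 0 is the empty word *)
Fixpoint digits_lsb (k fuel n : nat) : seq nat :=
  match fuel with
  | 0 => [::]
  | f.+1 => if n == 0 then [::] else n %% k :: digits_lsb k f (n %/ k)
  end.

Definition base_expansion (k n : nat) : seq nat := rev (digits_lsb k n n).

Definition delta_word (Q : Type) (delta : Q -> nat -> Q) (q : Q) (w : seq nat) : Q :=
  foldl delta q w.

Definition is_automatic (T : Type) (a : nat -> T) : Prop :=
  exists k : nat, (2 <= k)%N /\
    exists (Q : finType) (delta : Q -> nat -> Q) (q0 : Q) (tau : Q -> T),
      forall n : nat, a n = tau (delta_word delta q0 (base_expansion k n)).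

(* Main.v *)
Require Import Defs.
From HB Require Import structures.
From mathcomp Require Import all_boot all_order all_algebra.
From mathcomp Require Import all_classical all_reals all_analysis.
From mathcomp Require Import zify ring lra.
Import Order.TTheory GRing.Theory Num.Theory.
Import numFieldNormedType.Exports.
Set Implicit Arguments. Unset Strict Implicit. Unset Printing Implicit Defensive.

Section Digits.
Variable k : nat.
Hypothesis hk : (1 < k)%N.

Lemma fuel_indep f f' n : (n <= f)%N -> (n <= f')%N ->
  digits_lsb k f n = digits_lsb k f' n.
Proof.
elim: f f' n => [|f IH] f' n.
  by rewrite leqn0 => /eqP -> _; case: f'.
case: f' => [|f'] hn hn'.
  by move: hn'; rewrite leqn0 => /eqP ->.
rewrite /=; case: eqP => // /eqP n0.
have hd : (n %/ k < n)%N by rewrite ltn_Pdiv // lt0n.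
by rewrite (IH f') //; [rewrite -ltnS; apply: leq_trans hd hn | rewrite -ltnS; apply: leq_trans hd hn'].
Qed.

Definition D n := digits_lsb k n n.

Lemma D_rec n : (0 < n)%N -> D n = n %% k :: D (n %/ k).
Proof.
move=> n0; rewrite /D; case: n n0 => // n _ /=.
congr (_ :: _); apply: fuel_indep => //.
by rewrite -ltnS ltn_Pdiv.
Qed.

Fixpoint low l r : seq nat :=
  match l with 0 => [::] | l'.+1 => r %% k :: low l' (r %/ k) end.

Lemma D_mul l m r : (0 < m)%N -> (r < k ^ l)%N -> D (m * k ^ l + r) = low l r ++ D m.
Proof.
have k0 : (0 < k)%N by apply: ltnW.
elim: l m r => [|l IH] m r m0.
  by rewrite expn0 ltnS leqn0 => /eqP ->; rewrite muln1 addn0.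
move=> hr; rewrite D_rec; last by rewrite ltn_addr // muln_gt0 m0 expn_gt0 k0.
have -> : m * k ^ l.+1 + r = (m * k ^ l) * k + r by rewrite expnSr mulnA.
rewrite modnMDl divnMDl // IH //=.
by rewrite ltn_divLR // -expnSr.
Qed.


Lemma split_sum (F : nat -> nat) c K :
  (\sum_(0 <= r < c * K) F r = \sum_(0 <= j < c) \sum_(0 <= r < K) F (j * K + r))%N.
Proof.
elim: c => [|c IH]; first by rewrite mul0n !big_geq.
rewrite big_nat_recr //= mulSnr (big_cat_nat _ (n := c * K)) ?leq_addr //= IH.
congr (_ + _)%N.
rewrite -{1}(add0n (c * K)) big_addn addKn.
by apply: eq_big_nat => i _; rewrite addnC.
Qed.

Variables (Q : finType) (delta : Q -> nat -> Q) (q0 : Q) (T : eqType) (tau : Q -> T)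
  (alpha : T) (a : nat -> T).
Hypothesis ha : forall n, a n = tau (delta_word delta q0 (base_expansion k n)).

Definition st n := delta_word delta q0 (base_expansion k n).
Definition E q l r := foldl delta q (rev (low l r)).

Lemma st_mul l m r : (0 < m)%N -> (r < k ^ l)%N -> st (m * k ^ l + r) = E (st m) l r.
Proof.
move=> m0 hr; rewrite /st /delta_word /base_expansion -/(D _) D_mul //.
by rewrite rev_cat foldl_cat.
Qed.

Definition G m l := (\sum_(0 <= r < k ^ l) (a (m * k ^ l + r) == alpha))%N.
Definition g q l := (\sum_(0 <= r < k ^ l) (tau (E q l r) == alpha))%N.

Lemma G_g m l : (0 < m)%N -> G m l = g (st m) l.
Proof.
move=> m0; apply: eq_big_nat => r /andP [_ hr].
by rewrite ha -/(st _) st_mul.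
Qed.

Lemma G_rec m l : G m l.+1 = (\sum_(0 <= j < k) G (m * k + j) l)%N.
Proof.
rewrite /G expnS split_sum; apply: eq_big_nat => j _.
apply: eq_big_nat => r _.
by rewrite !mulnDl addnA -mulnA.
Qed.

Definition Rset : {set Q} := [set q | `[< exists m, (0 < m)%N /\ st m = q >]].

Lemma st_in m : (0 < m)%N -> st m \in Rset.
Proof. by move=> m0; rewrite inE; apply/asboolP; exists m. Qed.

Definition Sn l := (\sum_(q in Rset) g q l)%N.

Lemma stepB l t m : (0 < m)%N -> (G m (l + t) <= k ^ t * Sn l)%N.
Proof.
elim: t m => [|t IH] m m0.
  rewrite addn0 expn0 mul1n G_g // /Sn (bigD1 (st m)) ?st_in //=.
  exact: leq_addr.
rewrite addnS G_rec expnS -mulnA.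
have -> : (k * (k ^ t * Sn l) = \sum_(0 <= j < k) (k ^ t * Sn l))%N.
  by rewrite sum_nat_const_nat subn0.
apply: leq_sum => j _; apply: IH.
by rewrite addn_gt0 muln_gt0 m0 (ltnW hk).
Qed.

Local Open Scope classical_set_scope.
Local Open Scope ring_scope.
Variable R : realType.

Definition hsum N : R := \sum_(1 <= n < N) (n%:R)^-1 * ((a n == alpha)%:R : R).

Lemma hsum_mono x y : (1 <= x)%N -> (x <= y)%N -> hsum x <= hsum y.
Proof.
move=> x1 xy; rewrite /hsum (big_cat_nat x1 xy) /= lerDl.
by apply: sumr_ge0 => n _; rewrite mulr_ge0 // invr_ge0.
Qed.

Lemma block m L : (0 < m)%N ->
  (G m L)%:R / ((m.+1 * k ^ L)%N%:R) <=
  \sum_((m * k ^ L)%N <= n < (m.+1 * k ^ L)%N) (n%:R)^-1 * ((a n == alpha)%:R : R).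
Proof.
move=> m0; have kL : (0 < k ^ L)%N by rewrite expn_gt0 (ltnW hk).
rewrite /G natr_sum mulrC mulr_sumr.
rewrite [X in _ <= X](_ : _ = \sum_(0 <= i < k ^ L) ((i + m * k ^ L)%N%:R)^-1 * ((a (i + m * k ^ L)%N == alpha)%:R : R)); last first.
  by rewrite -{1}(add0n (m * k ^ L)%N) big_addn mulSnr addKn.
apply: ler_sum_nat => r /andP [_ hr].
rewrite addnC; apply: ler_wpM2r => //.
have p1 : 0 < (m * k ^ L + r)%N%:R :> R by rewrite ltr0n addn_gt0 muln_gt0 m0 kL.
rewrite lef_pV2 ?posrE ?ltr0n ?muln_gt0 ?kL //.
- by rewrite ler_nat mulSnr addnC leq_add2l ltnW.
- by rewrite addn_gt0 muln_gt0 m0 kL orbT.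
Qed.

Lemma stepA_ineq m L : (0 < m)%N ->
  \sum_(0 <= l < L) (G m l)%:R / ((m.+1 * k ^ l)%N%:R) <= hsum (m * k ^ L)%N.
Proof.
move=> m0; have k0 : (0 < k)%N by apply: ltnW.
elim: L => [|L IH].
  by rewrite big_geq // /hsum; apply: sumr_ge0 => n _; rewrite mulr_ge0 // invr_ge0.
rewrite big_nat_recr //=.
have kL0 : (0 < k ^ L)%N by rewrite expn_gt0 k0.
have h1 : (1 <= (m * k ^ L)%N)%N by rewrite muln_gt0 m0 expn_gt0 k0.
have h2 : (m * k ^ L <= m.+1 * k ^ L)%N by rewrite leq_mul2r leqnSn orbT.
have h3 : (m.+1 * k ^ L <= (m * k ^ L.+1)%N)%N.
  rewrite expnSr mulnA; move: (k ^ L)%N kL0 => x x0; nia.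
apply: le_trans (hsum_mono _ h3); last by apply: leq_trans h1 h2.
rewrite /hsum (big_cat_nat h1 h2) /=.
apply: lerD; first exact: IH.
exact: block.
Qed.


Definition avgG m L : R := (L%:R)^-1 * \sum_(0 <= l < L) (G m l)%:R / ((k ^ l)%N%:R).

Lemma stepA m (m0 : (0 < m)%N)
  (hyp : ((ln (N%:R : R))^-1 * hsum N.+1) @[N --> \oo] --> (0 : R))
  eps (he : 0 < eps) : exists L0, forall L, (L0 <= L)%N -> avgG m L <= eps.
Proof.
have k0 : (0 < k)%N by apply: ltnW.
set c := ln ((m * k)%N%:R : R).
have c0 : 0 < c by apply: ln_gt0; rewrite ltr1n; nia.
set eta := eps / ((m.+1)%:R * c).
have eta0 : 0 < eta by apply: divr_gt0 => //; apply: mulr_gt0 => //; rewrite ltr0n.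
move/cvgrPdist_lt: hyp => /(_ eta eta0) [N0 _ HN0].
exists N0.+2 => L hL.
have hL1 : (0 < L)%N by apply: leq_trans hL.
have kLbig : (N0.+2 < m * k ^ L)%N.
  have := ltn_expl L hk; move: (k ^ L)%N => x hx; nia.
set N := (m * k ^ L).-1.
have eN : N.+1 = (m * k ^ L)%N by rewrite prednK //; apply: leq_trans kLbig.
have HN : `|0 - (ln (N%:R : R))^-1 * hsum N.+1| < eta.
  apply: HN0; rewrite /= /N; nia.
have lnN0 : 0 < ln (N%:R : R) by apply: ln_gt0; rewrite ltr1n /N; nia.
have hsE : hsum N.+1 = ln (N%:R : R) * ((ln (N%:R : R))^-1 * hsum N.+1).
  by rewrite mulrA mulfV ?mul1r // gt_eqF.
have lnle : ln (N%:R : R) <= c *+ L.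
  rewrite -lnXn; last by rewrite ltr0n muln_gt0 m0 k0.
  rewrite ler_ln ?posrE ?exprn_gt0 ?ltr0n ?muln_gt0 ?m0 ?k0 //; last by rewrite /N; nia.
  rewrite -natrX ler_nat expnMn /N; apply: leq_trans (leq_pred _) _; apply: leq_mul => //.
  by rewrite -{1}(expn1 m) leq_pexp2l.
have sumE : \sum_(0 <= l < L) (G m l)%:R / ((k ^ l)%N%:R) =
    (m.+1)%:R * \sum_(0 <= l < L) (G m l)%:R / ((m.+1 * k ^ l)%N%:R) :> R.
  rewrite mulr_sumr; apply: eq_bigr => l _.
  rewrite natrM invfM; field.
  apply/andP; split; apply: lt0r_neq0; first by rewrite ltr0n expn_gt0 k0.
  by have := ler0n R m; lra.
have hN : (ln (N%:R : R))^-1 * hsum N.+1 <= eta.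
  by apply: le_trans (ltW HN); rewrite sub0r normrN ler_norm.
rewrite /avgG sumE.
apply: (@le_trans _ _ ((L%:R)^-1 * ((m.+1)%:R * ((c *+ L) * eta)))).
  rewrite ler_wpM2l ?invr_ge0 // ler_wpM2l //.
  apply: le_trans (stepA_ineq L m0) _.
  rewrite -eN hsE; apply: le_trans (ler_wpM2l (ltW lnN0) hN) _.
  by rewrite ler_wpM2r // ltW.
rewrite /eta -[c *+ L]mulr_natr.
suff -> : (L%:R)^-1 * ((m.+1)%:R * (c * L%:R * (eps / ((m.+1)%:R * c)))) = eps by [].
field.
rewrite gt_eqF // pnatr_eq0 -lt0n hL1 andbT; apply: lt0r_neq0.
by have := ler0n R m; lra.
Qed.


Definition avgg q L : R := (L%:R)^-1 * \sum_(0 <= l < L) (g q l)%:R / ((k ^ l)%N%:R).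

Lemma ratio_le m l L : (0 < m)%N -> (l <= L)%N ->
  (G m L)%:R / ((k ^ L)%N%:R) <= (Sn l)%:R / ((k ^ l)%N%:R) :> R.
Proof.
move=> m0 lL; have k0 : (0 < k)%N by apply: ltnW.
have := stepB l (L - l) m0; rewrite subnKC // => hB.
have kl0 : 0 < (k ^ l)%N%:R :> R by rewrite ltr0n expn_gt0 k0.
have kL0 : 0 < (k ^ L)%N%:R :> R by rewrite ltr0n expn_gt0 k0.
rewrite ler_pdivrMr // mulrAC ler_pdivlMr //.
have -> : (k ^ L)%N = (k ^ (L - l) * k ^ l)%N by rewrite -expnD subnK.
rewrite -!natrM ler_nat.
by rewrite mulnA leq_mul2r (mulnC (Sn l)) hB orbT.
Qed.

Lemma small
  (hyp : ((ln (N%:R : R))^-1 * hsum N.+1) @[N --> \oo] --> (0 : R))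
  (eps : R) (he : 0 < eps) : exists l, forall m, (0 < m)%N -> (G m l)%:R <= eps * (k ^ l)%N%:R.
Proof.
have k0 : (0 < k)%N by apply: ltnW.
have Q0 : (0 < #|Q|)%N by apply/card_gt0P; exists q0.
set eps' := eps / #|Q|%:R.
have e'0 : 0 < eps' by rewrite divr_gt0 // ltr0n.
have H : \forall L \near \oo, forall q, q \in Rset -> avgg q L <= eps'.
  apply: filter_forall => q.
  case: (boolP (q \in Rset)) => [qR|qR]; last by apply: nearW => L /negP.
  move: qR; rewrite inE => /asboolP [m [m0 <-]].
  have [L0 HL0] := stepA m0 hyp e'0.
  exists L0 => // L hL _.
  rewrite /avgg; under eq_bigr => l _ do rewrite -G_g //.
  exact: HL0.
case: H => N0 _ HN0.
exists N0.+1 => m m0.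
set L := N0.+1.
have hL := HN0 L (leqnSn N0).
have kL0 : 0 < (k ^ L)%N%:R :> R by rewrite ltr0n expn_gt0 k0.
rewrite -ler_pdivrMr //.
have -> : (G m L)%:R / (k ^ L)%N%:R = (L%:R)^-1 * \sum_(0 <= l < L) ((G m L)%:R / (k ^ L)%N%:R) :> R.
  by rewrite sumr_const_nat subn0 -[X in _ = _ * X]mulr_natl mulKf // pnatr_eq0.
apply: (@le_trans _ _ ((L%:R)^-1 * \sum_(0 <= l < L) ((Sn l)%:R / (k ^ l)%N%:R))).
  rewrite ler_wpM2l ?invr_ge0 ?ler0n //; apply: ler_sum_nat => l /andP [_ hl].
  by apply: ratio_le => //; apply: ltnW.
have -> : (L%:R)^-1 * \sum_(0 <= l < L) ((Sn l)%:R / (k ^ l)%N%:R) = \sum_(q in Rset) avgg q L :> R.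
  rewrite /avgg -mulr_sumr; congr (_ * _).
  rewrite exchange_big /=; apply: eq_bigr => l _.
  by rewrite /Sn natr_sum mulr_suml.
apply: (@le_trans _ _ (\sum_(q in Rset) eps')); first by apply: ler_sum => q qR; apply: hL.
rewrite sumr_const.
rewrite (esym (mulr_natr eps' #|Rset|)).
apply: le_trans (ler_wpM2l (ltW e'0) (_ : #|Rset|%:R <= #|Q|%:R :> R)) _.
  by rewrite ler_nat max_card.
by rewrite /eps' mulfVK // pnatr_eq0 -lt0n.
Qed.


Lemma count_bound (eps : R) l (e0 : 0 <= eps)
  (Hl : forall m, (0 < m)%N -> (G m l)%:R <= eps * (k ^ l)%N%:R) N :
  \sum_(1 <= n < N.+1) ((a n == alpha)%:R : R) <= (k ^ l)%N%:R + eps * N%:R.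
Proof.
have k0 : (0 < k)%N by apply: ltnW.
set K := (k ^ l)%N.
have K0 : (0 < K)%N by rewrite expn_gt0 k0.
set p := (N %/ K)%N.
have hN : (N.+1 <= p.+1 * K)%N by apply: ltn_ceil.
have h1 : ((\sum_(1 <= n < N.+1) (a n == alpha)) <= \sum_(0 <= n < p.+1 * K) (a n == alpha))%N.
  rewrite [X in (_ <= X)%N](big_cat_nat (n := N.+1)) //=.
  apply: leq_trans (leq_addr _ _).
  by rewrite [X in (_ <= X)%N](big_cat_nat (n := 1)) //= leq_addl.
rewrite split_sum [X in (_ <= X)%N]big_ltn // in h1.
have h2 : ((\sum_(0 <= r < K) (a (0 * K + r) == alpha)) <= K)%N.
  apply: leq_trans (_ : (\sum_(0 <= r < K) 1 <= K)%N).
    by apply: leq_sum => r _; apply: leq_b1.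
  by rewrite sum_nat_const_nat subn0 muln1.
rewrite -natr_sum.
apply: le_trans (_ : ((K + \sum_(1 <= j < p.+1) G j l)%N%:R <= _)).
  by rewrite ler_nat; apply: leq_trans h1 _; rewrite leq_add2r.
rewrite natrD lerD2l natr_sum.
apply: le_trans (_ : \sum_(1 <= j < p.+1) (eps * K%:R) <= _).
  by apply: ler_sum_nat => j /andP [j1 _]; apply: Hl.
rewrite sumr_const_nat subn1 /= -mulrnAr ler_wpM2l // -[_ *+ p]mulr_natr -natrM ler_nat mulnC; apply: leq_trunc_div.
Qed.

End Digits.

Local Open Scope classical_set_scope.
Local Open Scope ring_scope.

Unset Implicit Arguments.
Set Strict Implicit.

Theorem lemma3p6 (R : realType) (T : finType) (a : nat -> T) (alpha : T) :
  is_automatic a ->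
  ((ln (N%:R : R))^-1 *
      \sum_(1 <= n < N.+1) (n%:R)^-1 * ((a n == alpha)%:R : R))
    @[N --> \oo] --> (0 : R) ->
  ((N%:R : R)^-1 * \sum_(1 <= n < N.+1) ((a n == alpha)%:R : R))
    @[N --> \oo] --> (0 : R).
Proof.
move=> [k [hk [Q [delta [q0 [tau ha]]]]]] hyp.
apply/cvgrPdist_lt => e e0.
have e20 : 0 < e / 2 by rewrite divr_gt0.
have [l Hl] := small hk ha hyp e20.
set K := (k ^ l)%N.
have [N0 hN0] : exists N0 : nat, K%:R / (e / 2) < N0%:R :> R.
  by eexists; apply: truncnS_gt.
exists N0.+1 => // N hN /=.
have N0' : 0 < N%:R :> R by rewrite ltr0n; apply: leq_trans hN.
have hC := count_bound hk (ltW e20) Hl N.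
rewrite sub0r normrN ger0_norm; last first.
  by rewrite mulr_ge0 ?invr_ge0 ?ler0n //; apply: sumr_ge0 => n _; rewrite ler0n.
apply: le_lt_trans (ler_wpM2l _ hC) _; first by rewrite invr_ge0 ler0n.
rewrite mulrDr.
have -> : (N%:R)^-1 * (e / 2 * N%:R) = e / 2 by field; rewrite gt_eqF.
have : K%:R / (e / 2) < N%:R :> R.
  by apply: lt_le_trans hN0 _; rewrite ler_nat ltnW.
rewrite ltr_pdivrMr // => hK.
have : (N%:R)^-1 * K%:R < e / 2.
  by rewrite mulrC ltr_pdivrMr // mulrC.
rewrite -/K; lra.
Qed.
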